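(* For every integer $m \ge 3$, the graph $P_m \boxtimes K_2$ is a planar graph that is closed locally Dirac; in particular there are infinitely many planar closed locally Dirac graphs.
   Context: $P_m$ is the path on $m$ vertices and $K_2$ the complete graph on 2 vertices. The strong product $G \boxtimes H$ has vertex set $V(G)\times V(H)$, with $(u,v)$ adjacent to $(x,y)$ iff either $u=x$ and $vy \in E(H)$, or $v=y$ and $ux \in E(G)$, or $ux \in E(G)$ and $vy \in E(H)$. A graph $G$ is closed locally Dirac if for every vertex $v$, the subgraph $\langle N[v]\rangle$ induced by the closed neighbourhood $N[v]=N(v)\cup\{v\}$ satisfies Dirac's condition, i.e. every vertex of $\langle N[v]\rangle$ has degree in $\langle N[v]\rangle$ at least $|N[v]|/2$. *)

(* Defs.v *)
From HB Require Import structures.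
From mathcomp Require Import all_boot all_order all_algebra.
From mathcomp Require Import all_classical all_reals topology normedtype.
Set Implicit Arguments. Unset Strict Implicit. Unset Printing Implicit Defensive.
Import Order.TTheory GRing.Theory Num.Theory numFieldNormedType.Exports.

(* A (simple) graph is an adjacency relation [g : rel T] on a finite type T. *)

Definition path_graph (m : nat) : rel 'I_m :=
  fun i j => (i.+1 == j :> nat) || (j.+1 == i :> nat).

Definition complete_graph (n : nat) : rel 'I_n := fun i j => i != j.

Definition strong_prod (T U : finType) (g : rel T) (h : rel U) : rel (T * U) :=
  fun x y => [|| (x.1 == y.1) && h x.2 y.2,
                 (x.2 == y.2) && g x.1 y.1
               | g x.1 y.1 && h x.2 y.2].

Definition closed_nbhd (T : finType) (g : rel T) (v : T) : {set T} :=
  [set w | (w == v) || g v w].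

Definition deg_in (T : finType) (g : rel T) (S : {set T}) (w : T) : nat :=
  #|[set x in S | g w x]|.

Definition closed_locally_Dirac (T : finType) (g : rel T) : Prop :=
  forall v w : T, w \in closed_nbhd g v ->
    #|closed_nbhd g v| <= 2 * deg_in g (closed_nbhd g v) w.

Local Open Scope ring_scope.
Local Open Scope classical_set_scope.

(* Planarity: a drawing in the plane R x R, vertices as distinct points,
   each edge uv as a simple arc (continuous, injective on [0,1]) from u to v,
   arc interiors avoiding vertex points and interiors of other edges' arcs. *)
Definition unit_interval (R : realType) : set R := [set t | 0 <= t <= 1].
Definition open_unit_interval (R : realType) : set R := [set t | 0 < t < 1].

Definition planar (R : realType) (T : finType) (g : rel T) : Prop :=
  exists (pos : T -> R * R) (arc : T -> T -> R -> R * R),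
    injective pos /\
    (forall u v, g u v ->
       [/\ {within @unit_interval R, continuous (arc u v)},
           {in @unit_interval R &, injective (arc u v)},
           arc u v 0 = pos u, arc u v 1 = pos v &
           forall t w, @open_unit_interval R t -> arc u v t <> pos w]) /\
    (forall u v x y, g u v -> g x y ->
       ~ ((x = u /\ y = v) \/ (x = v /\ y = u)) ->
       forall s t, @open_unit_interval R s -> @open_unit_interval R t ->
         arc u v s <> arc x y t).

(* Main.v *)
Require Import Defs.
From mathcomp Require Import all_boot all_order all_algebra.
From mathcomp Require Import all_classical all_reals topology normedtype.
From mathcomp Require Import zify ring lra.
Set Warnings "-all".
Import Order.TTheory GRing.Theory Num.Theory numFieldNormedType.Exports.

Section D.
Variable m : nat.
Local Notation T := ('I_m * 'I_2)%type.
Local Notation G := (strong_prod (@path_graph m) (@complete_graph 2)).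

Lemma adjE0 (x y : T) : G x y = [&& x != y, (x.1:nat) <= y.1 + 1 & (y.1:nat) <= x.1 + 1].
Proof.
case: x => i a; case: y => j b.
rewrite /strong_prod /path_graph /complete_graph /= xpair_eqE -!val_eqE /=.
case: (a == b) => /=; lia.
Qed.

Lemma nbE (v w : T) : (w \in closed_nbhd G v) = ((w.1:nat) <= v.1 + 1) && ((v.1:nat) <= w.1 + 1).
Proof.
rewrite /closed_nbhd inE adjE0 eq_sym.
case: v => i a; case: w => j b /=. rewrite xpair_eqE -!val_eqE /=.
case: (b == a) => /=; lia.
Qed.

Lemma oth (x : T) : x != (x.1, if x.2 == ord0 then ord_max else ord0).
Proof. case: x => j [[|[|k]] hk] //=; by rewrite xpair_eqE -val_eqE /= andbF. Qed.

Lemma neq1 (x y : T) : (x.1 : nat) != y.1 -> x != y.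
Proof. by apply: contraNneq => ->. Qed.

Lemma dirac : closed_locally_Dirac G.
Proof.
move=> v w wN.
set N := closed_nbhd G v.
have [p1 p2] : ((v.1, ord0) \in N) /\ ((v.1, ord_max) \in N) by rewrite !nbE /=; lia.
have N2 : 2 <= #|N|.
  apply: (@leq_trans #|[set (v.1, ord0 : 'I_2); (v.1, ord_max)]|).
    by rewrite cards2 xpair_eqE eqxx.
  apply: subset_leq_card; apply/fintype.subsetP => x; rewrite in_set2 => /orP[/eqP->|/eqP->]; [exact: p1|exact: p2].
have N6 : #|N| <= 6.
  pose f (x : T) : ('I_3 * 'I_2)%type := (inord (x.1 + 1 - v.1), x.2).
  have fi : {in N &, injective f}.
    case=> [i a] [j b]; rewrite !nbE /= => hi hj [] /(congr1 val) /=.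
    rewrite !inordK; try lia. move=> e ->; congr pair; apply/val_inj => /=; lia.
  rewrite -(card_in_imset fi); apply: leq_trans (max_card _) _.
  by rewrite card_prod !card_ord.
pose S := finset (fun x => (x \in N) && G w x).
have -> : deg_in G N w = #|S| by [].
case: (boolP ((w.1 : nat) == v.1)) => hw.
  have -> : S = N :\ w.
    apply/finset.setP => x; rewrite in_setD1 /S finset.in_set /= !nbE adjE0 [x == w]eq_sym.
    move: (wN); rewrite nbE => wN'; move/eqP: hw => hw.
    by rewrite hw; case: (w == x); case: (x.1 <= v.1 + 1)%N; case: (v.1 <= x.1 + 1)%N.
  move: (cardsD1 w N); rewrite wN /= => e; move: N2; rewrite e; lia.
have hw' : forall b : 'I_2, (w != (v.1, b)) && ((v.1, b) != w).
  by move=> b; rewrite eq_sym andbb; apply: contraNneq hw => /(congr1 fst) /= ->.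
have wN' := wN; rewrite nbE in wN'.
set ow : 'I_2 := if w.2 == ord0 then ord_max else ord0.
have hoW : (w != (w.1, ow)) && ((w.1, ow) != w).
  by rewrite eq_sym andbb /ow eq_sym; apply: oth.
have q1 : (v.1, ord0) \in S.
  rewrite /S finset.in_set /= nbE adjE0 /=; case/andP: (hw' ord0) => -> _; lia.
have q2 : (v.1, ord_max) \in S :\ (v.1, ord0).
  rewrite in_setD1 /S finset.in_set /= nbE adjE0 /= xpair_eqE -val_eqE /=.
  case/andP: (hw' ord_max) => -> _; rewrite eqxx (_ : (ord_max == ord0 :> 'I_2) = false) //=; lia.
have q3 : (w.1, ow) \in S :\ (v.1, ord0) :\ (v.1, ord_max).
  rewrite !in_setD1 /S finset.in_set /= adjE0 nbE /=.
  have d0 : (w.1, ow) != (v.1, ord0) by apply: neq1.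
  have d1 : (w.1, ow) != (v.1, ord_max) by apply: neq1.
  rewrite d0 d1; case/andP: hoW => -> _ /=; lia.
rewrite (cardsD1 (v.1, ord0) S) q1 (cardsD1 (v.1, ord_max) (S :\ (v.1, ord0))) q2 (cardsD1 (w.1, ow) (S :\ (v.1, ord0) :\ (v.1, ord_max))) q3.
move: N6; lia.
Qed.
End D.
Import Order.TTheory GRing.Theory Num.Theory numFieldNormedType.Exports.
Local Open Scope ring_scope.

Section P.
Variable R : realType.

Lemma contM (f g : R -> R) : continuous f -> continuous g -> continuous (fun t => f t * g t).
Proof. move=> hf hg x; exact: (cvgM (hf x) (hg x)). Qed.
Lemma contD (f g : R -> R) : continuous f -> continuous g -> continuous (fun t => f t + g t).
Proof. move=> hf hg x; exact: (cvgD (hf x) (hg x)). Qed.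
Lemma contN (f : R -> R) : continuous f -> continuous (fun t => - f t).
Proof. move=> hf x; exact: (cvgN (hf x)). Qed.
Lemma contC (c : R) : continuous (fun _ : R => c).
Proof. exact: cst_continuous. Qed.
Lemma contI : continuous (fun t : R => t).
Proof. by move=> x. Qed.
Lemma contP (f g : R -> R) : continuous f -> continuous g -> continuous (fun t => (f t, g t)).
Proof. move=> hf hg x; exact: (cvg_pair (hf x) (hg x)). Qed.

Definition r (i : nat) : R := (i.+1)%:R.
Definition sg (a : 'I_2) : R := if a == ord0 then 1 else -1.

Lemma r_ge1 i : 1 <= r i.
Proof. by rewrite /r ler1n. Qed.
Lemma rS i : r i.+1 = r i + 1.
Proof. by rewrite /r natr1. Qed.
Lemma r_inj i j : r i = r j -> i = j.
Proof. by rewrite /r => /eqP; rewrite eqr_nat => /eqP []. Qed.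

Lemma nat_between i j (t : R) : r i = r j + t -> 0 < t < 1 -> False.
Proof.
move=> e /andP[t0 t1].
case: (leqP i j) => h.
  have : r i <= r j by rewrite /r ler_nat.
  clear h => ?; exfalso; lra.
have : r j + 1 <= r i by rewrite -rS /r ler_nat.
clear h => ?; exfalso; lra.
Qed.

Lemma nat_frac i j (s t : R) : r i + s = r j + t -> 0 < s < 1 -> 0 < t < 1 -> i = j.
Proof.
move=> e /andP[s0 s1] /andP[t0 t1].
case: (ltngtP i j) => // h.
  have : r i + 1 <= r j by rewrite -rS /r ler_nat.
  clear h => ?; exfalso; lra.
have : r j + 1 <= r i by rewrite -rS /r ler_nat.
clear h => ?; exfalso; lra.
Qed.

Lemma sq_inj (a b : R) : 0 <= a -> 0 <= b -> a ^+ 2 = b ^+ 2 -> a = b.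
Proof. move=> a0 b0; rewrite !expr2 => e; nra. Qed.

Lemma sg_cases a : sg a = 1 \/ sg a = -1.
Proof. by rewrite /sg; case: (a == ord0); [left|right]. Qed.
Lemma sg2 a : sg a ^+ 2 = 1.
Proof. by case: (sg_cases a) => ->; rewrite ?sqrrN expr1n. Qed.

Lemma I2_neq (a b : 'I_2) : a != b -> b = if a == ord0 then ord_max else ord0.
Proof.
case: a => [[|[|k]] ha] //; case: b => [[|[|l]] hb] //= _; by apply: val_inj.
Qed.

Lemma sg_neq (a b : 'I_2) : a != b -> sg b = - sg a.
Proof.
move=> /I2_neq ->; rewrite /sg; case: (a == ord0) => //=.
by rewrite opprK.
Qed.

Lemma sg_inj (a b : 'I_2) : sg a = sg b -> a = b.
Proof.
case: (eqVneq a b) => // /sg_neq ->.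
by case: (sg_cases a) => -> ?; exfalso; lra.
Qed.

Lemma I2_two (a b c : 'I_2) : b != a -> c != a -> b = c.
Proof. by rewrite ![b == a]eq_sym ![c == a]eq_sym => /I2_neq -> /I2_neq ->. Qed.

Variable m : nat.
Local Notation T := ('I_m * 'I_2)%type.
Local Notation G := (strong_prod (@path_graph m) (@complete_graph 2)).

Lemma adjE (x y : T) : G x y = [&& x != y, (x.1:nat) <= y.1 + 1 & (y.1:nat) <= x.1 + 1]%N.
Proof.
case: x => i a; case: y => j b.
rewrite /strong_prod /path_graph /complete_graph /= xpair_eqE -!val_eqE /=.
case: (a == b) => /=; lia.
Qed.

Lemma G_sym u v : G u v = G v u.
Proof. by rewrite !adjE eq_sym; case: (v == u) => /=; lia. Qed.

Lemma pairE (x y : T) : (x.1 : nat) = y.1 -> x.2 = y.2 -> x = y.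
Proof. by case: x => i a; case: y => j b /= /val_inj -> ->. Qed.

Definition pos (x : T) : R * R := (sg x.2 * r x.1, 0).
Definition S (u v : T) (t : R) : R := (1 - t) * r u.1 + t * r v.1.
Definition tau (u v : T) : R :=
  if (u.1 < v.1)%N then sg u.2 else if (v.1 < u.1)%N then sg v.2 else 1.
Definition arc (u v : T) (t : R) : R * R :=
  if u.2 == v.2 then (sg u.2 * S u v t, 0)
  else (sg u.2 * S u v t * (1 - 2 * t), tau u v * (4 * S u v t ^+ 2 * (t * (1 - t)))).
Definition rho (p : R * R) : R := p.1 ^+ 2 + `|p.2|.

Lemma arc_sym u v t : arc v u t = arc u v (1 - t).
Proof.
rewrite /arc [v.2 == u.2]eq_sym.
have eS : S v u t = S u v (1 - t) by rewrite /S; ring.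
have etau : tau v u = tau u v by rewrite /tau; case: (ltngtP u.1 v.1).
case: eqP => e2.
  by rewrite e2 eS.
rewrite eS etau (@sg_neq u.2 v.2); last by apply/eqP.
congr pair; ring.
Qed.

Lemma arc0 u v : arc u v 0 = pos u.
Proof. rewrite /arc /S /pos; case: ifP => _; congr pair; ring. Qed.

Lemma arc1 u v : arc u v 1 = pos v.
Proof.
rewrite /arc /S /pos; case: eqP => e2.
  rewrite e2; congr pair; ring.
rewrite (@sg_neq u.2 v.2); last by apply/eqP.
congr pair; ring.
Qed.

Lemma tau_norm u v : `|tau u v| = 1.
Proof.
rewrite /tau; case: ifP => _; last case: ifP => _.
- by case: (sg_cases u.2) => ->; rewrite ?normrN normr1.
- by case: (sg_cases v.2) => ->; rewrite ?normrN normr1.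
- by rewrite normr1.
Qed.

Lemma rho_arc u v t : 0 <= t <= 1 -> rho (arc u v t) = S u v t ^+ 2.
Proof.
move=> /andP[t0 t1]; rewrite /rho /arc; case: ifP => _ /=.
  by rewrite normr0 addr0 exprMn sg2 mul1r.
have h : 0 <= 4 * S u v t ^+ 2 * (t * (1 - t)).
  apply: mulr_ge0; [apply: mulr_ge0 => //; exact: sqr_ge0|].
  apply: mulr_ge0 => //; lra.
rewrite normrM tau_norm mul1r (ger0_norm h) !exprMn sg2 mul1r; ring.
Qed.

Lemma rho_pos w : rho (pos w) = r w.1 ^+ 2.
Proof. by rewrite /rho /pos /= normr0 addr0 exprMn sg2 mul1r. Qed.

Lemma S_ge1 u v t : 0 <= t <= 1 -> 1 <= S u v t.
Proof.
move=> /andP[t0 t1]; have := r_ge1 u.1; have := r_ge1 v.1; rewrite /S; nra.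
Qed.

Lemma S_eq u v s x y t : 0 <= s <= 1 -> 0 <= t <= 1 ->
  arc u v s = arc x y t -> S u v s = S x y t.
Proof.
move=> hs ht e; have := congr1 rho e; rewrite !rho_arc //.
apply: sq_inj.
- have := S_ge1 u v s hs; lra.
- have := S_ge1 x y t ht; lra.
Qed.

Lemma orient_cases (u v : T) : G u v -> (u.1 <= v.1)%N ->
  ((v.1 : nat) = u.1 /\ u.2 != v.2) \/ ((v.1 : nat) = u.1.+1).
Proof.
case: u => i a; case: v => j b; rewrite adjE /= => /and3P[neq h1 h2] h.
case: (boolP ((i : nat) == j)) => e.
  left; move/eqP: e => e; split => //.
  by apply: contra neq => /eqP e2; apply/eqP; apply: pairE.
right; clear neq; lia.
Qed.

Lemma Svert (u v : T) (t : R) : (v.1 : nat) = u.1 -> S u v t = r u.1.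
Proof. by move=> e; rewrite /S e; ring. Qed.
Lemma tauvert (u v : T) : (v.1 : nat) = u.1 -> tau u v = 1.
Proof. by move=> e; rewrite /tau e ltnn. Qed.
Lemma Sann (u v : T) (t : R) : (v.1 : nat) = u.1.+1 -> S u v t = r u.1 + t.
Proof. by move=> e; rewrite /S e rS; ring. Qed.
Lemma tauann (u v : T) : (v.1 : nat) = u.1.+1 -> tau u v = sg u.2.
Proof. by move=> e; rewrite /tau e ltnSn. Qed.

Lemma sgP a (P : R) : 0 < P -> sg a * P != 0.
Proof. by move=> hP; case: (sg_cases a) => ->; rewrite ?mul1r ?mulN1r ?oppr_eq0 gt_eqF. Qed.

Lemma avoid_or (u v w : T) (t : R) : G u v -> (u.1 <= v.1)%N -> 0 < t < 1 -> arc u v t <> pos w.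
Proof.
move=> huv hle /andP[t0 t1] e.
have ht' : 0 <= t <= 1 by apply/andP; split; lra.
have hp : 0 < t * (1 - t) by apply: mulr_gt0 => //; lra.
case: (orient_cases _ _ huv hle) => [[e1 n2]|e1].
  move: e; rewrite /arc (negbTE n2) /pos (Svert _ _ _ e1) (tauvert _ _ e1) => [][_].
  have := r_ge1 u.1; nra.
case: (eqVneq u.2 v.2) => e2.
  have := congr1 rho e; rewrite rho_arc // rho_pos (Sann _ _ _ e1) => h.
  have := r_ge1 u.1; have := r_ge1 w.1 => ? ?.
  have h' : r u.1 + t = r w.1 by apply: sq_inj h; lra.
  by apply: (nat_between w.1 u.1 t (esym h')); apply/andP.
move: e; rewrite /arc (negbTE e2) /pos (Sann _ _ _ e1) (tauann _ _ e1) => [][_] /eqP.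
apply/negP; apply: sgP; apply: mulr_gt0 => //; apply: mulr_gt0 => //.
apply: exprn_gt0; have := r_ge1 u.1; lra.
Qed.

Lemma Ppos (x y : T) (t : R) : 0 < t < 1 -> 0 < 4 * S x y t ^+ 2 * (t * (1 - t)).
Proof.
move=> /andP[t0 t1].
have ht : 0 <= t <= 1 by apply/andP; split; lra.
apply: mulr_gt0; [apply: mulr_gt0 => //; apply: exprn_gt0; have := S_ge1 x y t ht; lra|].
apply: mulr_gt0 => //; lra.
Qed.

Lemma cross_or (u v x y : T) (s t : R) : G u v -> G x y -> (u.1 <= v.1)%N -> (x.1 <= y.1)%N ->
  0 < s < 1 -> 0 < t < 1 -> arc u v s = arc x y t ->
  (x = u /\ y = v) \/ (x = v /\ y = u).
Proof.
move=> huv hxy hu hx hs ht e.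
have hs' : 0 <= s <= 1 by case/andP: hs => ? ?; apply/andP; split; lra.
have ht' : 0 <= t <= 1 by case/andP: ht => ? ?; apply/andP; split; lra.
have eS := S_eq u v s x y t hs' ht' e.
case: (orient_cases _ _ huv hu) => [[e1 n2]|e1];
case: (orient_cases _ _ hxy hx) => [[f1 m2]|f1].
- rewrite (Svert _ _ _ e1) (Svert _ _ _ f1) in eS.
  have c1 := r_inj _ _ eS.
  case: (eqVneq x.2 u.2) => g.
    left; split; apply: pairE.
    + by rewrite c1.
    + exact: g.
    + by rewrite f1 e1 c1.
    + by apply: (I2_two x.2); rewrite eq_sym // g.
  right; split; apply: pairE.
  + by rewrite e1 c1.
  + by apply: (I2_two u.2); rewrite // eq_sym.
  + by rewrite f1 c1.
  + by apply: (I2_two x.2); rewrite eq_sym.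
- rewrite (Svert _ _ _ e1) (Sann _ _ _ f1) in eS.
  by case: (nat_between _ _ _ eS ht).
- rewrite (Sann _ _ _ e1) (Svert _ _ _ f1) in eS.
  by case: (nat_between _ _ _ (esym eS) hs).
have eS' := eS; rewrite (Sann _ _ _ e1) (Sann _ _ _ f1) in eS'.
have c1 := nat_frac _ _ _ _ eS' hs ht.
have est : s = t by move: eS'; rewrite c1; lra.
subst s.
have ex : x.2 = u.2 -> y.2 = v.2 -> x = u /\ y = v.
  move=> g g'; split; apply: pairE => //.
  by rewrite f1 e1; congr (_.+1); exact: esym c1.
move: e; rewrite /arc (tauann _ _ e1) (tauann _ _ f1) eS.
have hP := Ppos x y t ht.
have hS : S x y t != 0 by have := S_ge1 x y t ht'; lra.
case: ifP => /eqP g1; case: ifP => /eqP g2 e;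
  have e2 := congr1 fst e; have e3 := congr1 snd e; rewrite /= in e2 e3.
- have g : x.2 = u.2 by apply: sg_inj; apply: (mulIf hS).
  by left; apply: ex; rewrite // -g1 -g2.
- exfalso; move: e3; apply/eqP; rewrite eq_sym; exact: sgP.
- exfalso; move: e3; apply/eqP; exact: sgP.
- have g : x.2 = u.2 by apply: sg_inj; apply: (mulIf (lt0r_neq0 hP)).
  left; apply: ex => //.
  by apply: (I2_two x.2); rewrite eq_sym; apply/eqP => // ee; apply: g1; rewrite -g.
Qed.

Lemma orient (u v : T) (s : R) : G u v -> 0 < s < 1 ->
  exists u' v' s', [/\ G u' v', (u'.1 <= v'.1)%N, 0 < s' < 1, arc u v s = arc u' v' s' &
    (u' = u /\ v' = v) \/ (u' = v /\ v' = u)].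
Proof.
move=> huv hs; case: (leqP u.1 v.1) => h.
  by exists u, v, s; split => //; left.
exists v, u, (1 - s); split.
- by rewrite G_sym.
- exact: ltnW.
- by case/andP: hs => ? ?; apply/andP; split; lra.
- by rewrite arc_sym; congr arc; ring.
- by right.
Qed.

Lemma planarG : planar R G.
Proof.
exists pos, arc; split; [|split].
- move=> [i a] [j b] e.
  have := congr1 rho e; rewrite !rho_pos /= => h.
  have rij : r i = r j by apply: sq_inj h; [have := r_ge1 i|have := r_ge1 j]; lra.
  have eij := r_inj _ _ rij.
  move: e; rewrite /pos /= rij => e1; have e2 := congr1 fst e1; rewrite /= in e2.
  have hr : r j != 0 by have := r_ge1 j; lra.
  have ab := sg_inj _ _ (mulIf hr e2).
  by apply: pairE.
- move=> u v huv; split.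
  + apply: continuous_subspaceT; rewrite /arc /S; case: (u.2 == v.2); apply: contP;
    rewrite ?expr2;
    repeat first [apply: contC | apply: contI | apply: contM | apply: contD | apply: contN].
  + move=> s1 s2; rewrite !in_setE /unit_interval /= => h1 h2 e.
    have eS := S_eq u v s1 u v s2 h1 h2 e.
    case: (boolP ((u.1 : nat) == v.1)) => hc.
      have n2 : u.2 != v.2.
        move: huv; rewrite adjE => /and3P[neq _ _]; apply: contra neq => /eqP e2.
        by apply/eqP; apply: pairE => //; apply/eqP.
      move: e; rewrite /arc (negbTE n2) eS => e; have e1 := congr1 fst e; rewrite /= in e1.
      have hc0 : sg u.2 * S u v s2 != 0.
        apply: sgP; have := S_ge1 u v s2 h2; lra.
      have := mulfI hc0 e1; lra.
    have h0 : (s1 - s2) * (r v.1 - r u.1) = S u v s1 - S u v s2 by rewrite /S; ring.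
    rewrite eS subrr in h0.
    move/eqP: h0; rewrite mulf_eq0 => /orP[/eqP|]; first lra.
    rewrite subr_eq0 => /eqP /r_inj hh.
    by move: hc; rewrite hh eqxx.
  + exact: arc0.
  + exact: arc1.
  + move=> t w ht; rewrite /open_unit_interval /= in ht.
    have [u' [v' [s' [h1 h2 h3 e1 _]]]] := orient u v t huv ht.
    rewrite e1; exact: avoid_or.
- move=> u v x y huv hxy hne s t hs ht e.
  rewrite /open_unit_interval /= in hs ht.
  have [u' [v' [s' [h1 h2 h3 e1 o1]]]] := orient u v s huv hs.
  have [x' [y' [t' [k1 k2 k3 f1 o2]]]] := orient x y t hxy ht.
  rewrite e1 f1 in e.
  have := cross_or u' v' x' y' s' t' h1 k1 h2 k2 h3 k3 e.
  case: o1 => [[? ?]|[? ?]]; case: o2 => [[? ?]|[? ?]] => -[[? ?]|[? ?]]; subst;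
  apply: hne; tauto.
Qed.
End P.

Local Close Scope ring_scope.

Theorem mainTheorem7 (m : nat) : 3 <= m ->
  (forall R : realType, planar R (strong_prod (@path_graph m) (@complete_graph 2))) /\
  closed_locally_Dirac (strong_prod (@path_graph m) (@complete_graph 2)).
Proof.
move=> _; split; [move=> R; exact: planarG | exact: dirac].
Qed.
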